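(* Let $q$ be a prime power and $n,k,\delta$ positive integers with $k\le n$ and $\delta\le 2k$. Put $h=\left\lfloor k+1-\frac{\delta}{2}\right\rfloor$. Then $$B_q(n,k,\delta;3)\le\left(1+\frac{1}{2\left[{k\atop h}\right]_q-1}\right)\frac{\left[{n\atop h}\right]_q}{\left[{k\atop h}\right]_q}.$$
   Context: For a prime power $q$, $\mathcal{G}_q(n,k)$ denotes the set of all $k$-dimensional subspaces of $\mathbb{F}_q^n$, and the Gaussian binomial coefficient is $\left[{n\atop k}\right]_q=\prod_{i=0}^{k-1}\frac{q^n-q^i}{q^k-q^i}=|\mathcal{G}_q(n,k)|$. An $\alpha$-$(n,k,\delta)_q^c$ covering Grassmannian code is a subset $\mathcal{C}\subseteq\mathcal{G}_q(n,k)$ (no repeated codewords) such that every set of $\alpha$ distinct codewords of $\mathcal{C}$ spans a subspace of $\mathbb{F}_q^n$ of dimension at least $k+\delta$. $B_q(n,k,\delta;\alpha)$ denotes the maximum size of an $\alpha$-$(n,k,\delta)_q^c$ code. *)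

(* Defs.v *)
From HB Require Import structures.
From mathcomp Require Import all_boot all_order all_algebra all_field.
Set Implicit Arguments. Unset Strict Implicit. Unset Printing Implicit Defensive.
Import Order.TTheory GRing.Theory Num.Theory.
Local Open Scope ring_scope.

Definition gauss_binom (q n k : nat) : rat :=
  \prod_(i < k) (((q ^ n)%N%:R - (q ^ i)%N%:R) / ((q ^ k)%N%:R - (q ^ i)%N%:R)).

Definition covering_code (F : finFieldType) (n k delta alpha : nat)
    (C : seq {vspace 'rV[F]_n}) : Prop :=
  [/\ uniq C,
      (forall U, U \in C -> \dim U = k) &
      (forall S : seq {vspace 'rV[F]_n},
          uniq S -> size S = alpha -> {subset S <= C} ->
          (k + delta <= \dim (\sum_(U <- S) U)%VS)%N)].

(* Main.v *)
Require Import Defs.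
From HB Require Import structures.
From mathcomp Require Import all_boot all_order all_algebra all_field zify ring.
Set Implicit Arguments. Unset Strict Implicit. Unset Printing Implicit Defensive.
Import Order.TTheory GRing.Theory Num.Theory.

Section Count.
Variables (F : finFieldType) (n : nat).
Local Notation V := 'rV[F]_n.
Local Notation q := #|F|.

Definition Tset m (U : {vspace V}) := [set t : m.-tuple V | free t && (<<t>> <= U)%VS].

Lemma card_vs (U : {vspace V}) : #|[pred x : V | x \in U]| = q ^ \dim U.
Proof. by rewrite -card_vspace. Qed.

Lemma card_diff (U W : {vspace V}) : (W <= U)%VS ->
  #|[pred x : V | (x \in U) && (x \notin W)]| = q ^ \dim U - q ^ \dim W.
Proof.
move=> WU; rewrite -!card_vspace -(cardID (mem W) (mem U)).
have -> : #|[predI mem U & mem W]| = #|W|.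
  by apply: eq_card => x; rewrite !inE; case: (boolP (x \in W)) => xW; rewrite ?andbF // (subvP WU _ xW).
by rewrite addKn; apply: eq_card => x; rewrite !inE andbC.
Qed.

Lemma card_Tset m (U : {vspace V}) :
  #|Tset m U| = \prod_(i < m) (q ^ \dim U - q ^ i).
Proof.
elim: m => [|m IH].
  rewrite big_ord0 -[RHS](card_tuple 0 V) /Tset.
  apply: eq_card => t; rewrite !inE tuple0 /= nil_free span_nil sub0v.
  by [].
pose f (p : m.-tuple V * V) : m.+1.-tuple V := [tuple of p.2 :: p.1].
have finj : injective f.
  by move=> [s x] [s' x'] /(congr1 val) /= [-> /val_inj ->].
pose P := [set p : m.-tuple V * V | (p.1 \in Tset m U) && (p.2 \in U) && (p.2 \notin <<p.1>>%VS)].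
have -> : Tset m.+1 U = f @: P.
  apply/setP => t; rewrite inE; apply/idP/imsetP.
    case/tupleP: t => x s; rewrite /= free_cons span_cons subv_add -memvE.
    case/andP=> /andP[xs fs] /andP[xU sU]; exists (s, x) => //.
      by rewrite inE /= inE fs sU xU xs.
  case=> -[s x]; rewrite inE /= inE => /andP[/andP[/andP[fs sU] xU] xs] ->.
  by rewrite /= free_cons span_cons subv_add -memvE xs fs xU sU.
rewrite card_imset // big_ord_recr /= -IH.
rewrite -[#|P|]sum1_card.
rewrite (@eq_bigl _ _ _ _ _ _ (fun p => (p.1 \in Tset m U) && ((p.2 \in U) && (p.2 \notin <<p.1>>%VS)))); last first.
  by move=> p; rewrite inE andbA.
rewrite -(pair_big_dep (fun s => s \in Tset m U) (fun s x => (x \in U) && (x \notin <<s>>%VS)) (fun _ _ => 1)) /=.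
rewrite -sum_nat_const; apply: eq_bigr => s; rewrite inE => /andP[fs sU].
rewrite sum1_card card_diff //.
by move: fs; rewrite /free => /eqP ->; rewrite size_tuple.
Qed.

Lemma dim3 (A B D : {vspace V}) :
  \dim (A + (B + (D + 0))) + \dim (A :&: B) + \dim (D :&: (A + B))
  = \dim A + \dim B + \dim D.
Proof.
rewrite addv0 addvA [(D :&: _)%VS]capvC.
have := dimv_sum_cap (A + B) D; have := dimv_sum_cap A B.
move=> e1 e2; lia.
Qed.

Lemma span_free_dim (s : seq V) : free s -> \dim <<s>> = size s.
Proof. by move/eqP. Qed.

Section Main.
Variables (k delta h : nat) (C : seq {vspace V}).
Hypothesis Cu : uniq C.
Hypothesis Cdim : forall U, U \in C -> \dim U = k.
Hypothesis Ccov : forall A B D, A \in C -> B \in C -> D \in C ->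
  uniq [:: A; B; D] -> k + delta <= \dim (A + (B + (D + 0))).
Hypothesis Hh : 2 * k < 2 * h + delta.
Hypothesis Hh0 : 0 < h.

Lemma noKL A B D d1 d2 : A \in C -> B \in C -> D \in C -> uniq [:: A; B; D] ->
  d1 <= \dim (A :&: B) -> d2 <= \dim (D :&: (A + B)) -> 2 * k < d1 + d2 + delta -> False.
Proof.
move=> AC BC DC u h1 h2 hk.
have := dim3 A B D; rewrite (Cdim AC) (Cdim BC) (Cdim DC) => e.
have := Ccov AC BC DC u => c.
have : k + delta + d1 + d2 <= k + k + k.
  rewrite -e; apply: leq_add; last exact: h2.
  by apply: leq_add.
move=> /=; clear -hk; lia.
Qed.

Lemma partner U W1 W2 : U \in C -> W1 \in C -> W2 \in C -> W1 != U -> W2 != U ->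
  h <= \dim (U :&: W1) -> h <= \dim (U :&: W2) -> W1 = W2.
Proof.
move=> UC W1C W2C n1 n2 d1 d2; apply/eqP; apply/negPn/negP => n12.
apply: (noKL UC W1C W2C _ d1 (d2 := h)) => //.
  by rewrite /= !inE negb_or eq_sym n1 eq_sym n2 n12.
apply: leq_trans d2 _; apply: dimvS; rewrite capvC; apply: capvS => //.
exact: addvSl.
lia.
Qed.

Lemma ar1 : 2 * k < h.+1 + h + delta. Proof. lia. Qed.
Lemma ar2 : 2 * k < h.+1 + h.-1 + delta. Proof. lia. Qed.
Lemma ar3 : 2 * k < h + h + delta. Proof. lia. Qed.

Definition T U := Tset h U.

Definition Ecnd U W (t : seq V) := if t is x :: s then
  [&& free s, (<<s>> <= U)%VS, x \in (U + W)%VS, x \notin U & x \notin W] else false.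

Definition E U := [set t : h.-tuple V |
  has (fun W => [&& W != U, h < \dim (U :&: W) & Ecnd U W t]) C].

Definition other U (t : h.-tuple V) := has (fun W => (W != U) && (t \in T W)) C.

Definition g U (t : h.-tuple V) : nat := (t \in T U) * (2 - other U t) + (t \in E U).

Lemma sum_bool_count (I : Type) (r : seq I) (P : pred I) :
  \sum_(i <- r) (P i : nat) = count P r.
Proof. by elim: r => [|a r IH]; rewrite ?big_nil ?big_cons //= IH. Qed.

Lemma sum_bool_card (P : {pred h.-tuple V}) :
  \sum_t (P t : nat) = #|P|.
Proof.
rewrite -sum1_card [RHS]big_mkcond; apply: eq_bigr => t _.
by rewrite unfold_in; case: (P t).
Qed.

Lemma sum_const_seq (I : Type) (r : seq I) c : \sum_(i <- r) c = size r * c.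
Proof. by elim: r => [|a r IH]; rewrite ?big_nil ?big_cons //= IH mulSn. Qed.

Lemma T_facts U t : t \in T U -> [/\ free t, (<<t>> <= U)%VS & \dim <<t>> = h].
Proof.
rewrite inE => /andP[f sU]; split => //.
by rewrite span_free_dim // size_tuple.
Qed.

Lemma E_facts U t : t \in E U -> exists W x s,
  [/\ W \in C, W != U, h < \dim (U :&: W), val t = x :: s &
   [&& free s, (<<s>> <= U)%VS, x \in (U + W)%VS, x \notin U & x \notin W]].
Proof.
rewrite inE => /hasP[W WC /and3P[nW dW]].
rewrite /Ecnd; case et: (tval t) => [|x s] // cnd.
by exists W, x, s; split.
Qed.

Lemma E_free U t : t \in E U -> free t.
Proof.
case/E_facts => W [x [s [_ _ _ et /and5P[fs sU _ xU _]]]].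
rewrite et free_cons fs andbT; apply: contra xU; exact: (subvP sU).
Qed.

Lemma ET U t W : t \in E U -> U \in C -> W \in C -> t \in T W -> False.
Proof.
move=> tE UC WC /T_facts[ft tW dt].
case/E_facts: tE => P [x [s [PC nPU dP et /and5P[fs sU xUP xU xP]]]].
have xt : x \in <<t>>%VS by apply: memv_span; rewrite et mem_head.
have xW := subvP tW _ xt.
have tUP : (<<t>> <= U + P)%VS.
  by rewrite et span_cons subv_add -memvE xUP (subv_trans sU (addvSl _ _)).
apply: (noKL UC PC WC _ dP (d2 := h)).
- rewrite /= !inE negb_or eq_sym nPU /=.
  rewrite andbT; apply/andP; split; apply/negP => /eqP e.
    by rewrite e xW in xU.
  by rewrite e xW in xP.
- by rewrite -dt; apply: dimvS; rewrite subv_cap tW tUP.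
- exact: ar1.
Qed.

Lemma EE U P x s t W : U \in C -> P \in C -> P != U -> h < \dim (U :&: P) ->
  val t = x :: s ->
  [&& free s, (<<s>> <= U)%VS, x \in (U + P)%VS, x \notin U & x \notin P] ->
  W \in C -> t \in E W -> (W == U) || (W == P).
Proof.
move=> UC PC nPU dP et cU WC /E_facts[W' [x' [s' [W'C nW'W dW' et' /and5P[fs' sW' _ _ _]]]]].
move: et'; rewrite et => -[ex es]; subst x' s'.
case/and5P: cU => fs sU _ _ _.
apply/negPn/negP; rewrite negb_or => /andP[nWU nWP].
have nW'U : W' != U.
  apply/negP => /eqP eW'; subst W'.
  have := partner UC PC WC nPU nWU (ltnW dP).
  by rewrite capvC => /(_ (ltnW dW')) eP; rewrite eP eqxx in nWP.
apply: (noKL WC W'C UC _ dW' (d2 := h.-1)).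
- by rewrite /= !inE negb_or eq_sym nW'W nWU nW'U.
- have -> : h.-1 = \dim <<s>>.
    by rewrite span_free_dim // -(size_tuple t) et.
  by apply: dimvS; rewrite subv_cap sU (subv_trans sW' (addvSl _ _)).
- exact: ar2.
Qed.

Lemma exists_other (s : seq {vspace V}) U : uniq s -> 1 < size s ->
  exists2 W, W \in s & W != U.
Proof.
case: s => [|a [|b s]] //= /andP[]; rewrite inE negb_or => /andP[nab _] _ _.
case: (eqVneq a U) => [eaU|naU]; last by exists a; rewrite ?inE ?eqxx.
by exists b; rewrite ?inE ?eqxx ?orbT // -eaU eq_sym.
Qed.

Lemma pointwise t : \sum_(U <- C) g U t <= 2 * free t.
Proof.
case: (boolP (has (fun U => t \in E U) C)) => [/hasP[U0 U0C tE0] | hE].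
  rewrite (E_free tE0) muln1.
  case/E_facts: (tE0) => P [x [s [PC nPU dP et cnd]]].
  apply: (@leq_trans (\sum_(U <- C) ((U == U0) + (U == P)))).
    rewrite big_seq_cond [X in _ <= X]big_seq_cond; apply: leq_sum => U /andP[UC _]; rewrite /g.
    have -> : (t \in T U) = false by apply/negP => /(ET tE0 U0C UC).
    rewrite mul0n add0n; case: (boolP (t \in E U)) => // tEU.
    by have := EE U0C PC nPU dP et cnd UC tEU; case: (U == U0); case: (U == P).
  rewrite big_split /= !sum_bool_count.
  have -> : count (fun U => U == U0) C = count_mem U0 C by [].
  have -> : count (fun U => U == P) C = count_mem P C by [].
  by rewrite !count_uniq_mem // U0C PC.
have gT U : U \in C -> g U t = (t \in T U) * (2 - other U t).
  move=> UC; rewrite /g; have -> : (t \in E U) = false; last by rewrite addn0.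
  by apply/negP => tEU; move/hasPn: hE => /(_ U UC); rewrite tEU.
rewrite big_seq; under eq_bigr => U UC do rewrite gT //; rewrite -big_seq.
case ft: (free t); last first.
  rewrite big1 // => U _; suff -> : (t \in T U) = false by [].
  by apply/negP => /T_facts[]; rewrite ft.
set c := count (fun U => t \in T U) C.
have uf : uniq (filter (fun U => t \in T U) C) by apply: filter_uniq.
case: (leqP c 1) => hc.
  apply: (@leq_trans (\sum_(U <- C) 2 * (t \in T U))).
    apply: leq_sum => U _; case: (t \in T U) => //=; rewrite !mul1n; exact: leq_subr.
  by rewrite -big_distrr /= sum_bool_count -/c; lia.
have -> : \sum_(U <- C) (t \in T U) * (2 - other U t) = c.
  rewrite /c -sum_bool_count big_seq [RHS]big_seq; apply: eq_bigr => U UC.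
  case tU: (t \in T U) => //; rewrite mul1n.
  have [W] : exists2 W, W \in filter (fun U => t \in T U) C & W != U.
    by apply: exists_other => //; rewrite size_filter.
  rewrite mem_filter => /andP[tW WC] nWU.
  suff -> : other U t by [].
  by apply/hasP; exists W => //; rewrite nWU tW.
case: (leqP c 2) => // hc3; exfalso.
have memf U := mem_filter (fun U => t \in T U) U C.
move: uf hc3; rewrite /c -size_filter.
case ef: (filter _ C) => [|a [|b [|d r]]] //=.
move: memf; rewrite ef => memf.
move=> + _.
rewrite !inE !negb_or => /andP[/andP[nab /andP[nad _]] /andP[/andP[nbd _] _]].
have /andP[ta aC] : (t \in T a) && (a \in C) by rewrite -memf mem_head.
have /andP[tb bC] : (t \in T b) && (b \in C) by rewrite -memf !inE eqxx orbT.
have /andP[td dC] : (t \in T d) && (d \in C) by rewrite -memf !inE eqxx !orbT.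
case/T_facts: ta => _ tsa dt; case/T_facts: tb => _ tsb _; case/T_facts: td => _ tsd _.
apply: (noKL aC bC dC _ (d1 := h) (d2 := h)).
- by rewrite /= !inE negb_or nab nad nbd.
- by rewrite -dt; apply: dimvS; rewrite subv_cap tsa tsb.
- by rewrite -dt; apply: dimvS; rewrite subv_cap tsd (subv_trans tsa (addvSl _ _)).
- exact: ar3.
Qed.

Lemma inj_E U W : U \in C -> W \in C -> W != U -> h < \dim (U :&: W) ->
  #|T (U :&: W)| <= #|E U|.
Proof.
move=> UC WC nWU dUW.
have nsub (A B : {vspace V}) : A \in C -> B \in C -> B != A -> ~~ (A <= B)%VS.
  move=> AC BC nBA; apply/negP => AB; move: nBA; rewrite eq_sym.
  by rewrite eqEdim AB (Cdim AC) (Cdim BC) leqnn.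
have [u uU uW] := subvPn (nsub U W UC WC nWU).
have nUW : U != W by rewrite eq_sym.
have [u' u'W u'U] := subvPn (nsub W U WC UC nUW).
set w := (u + u')%R.
have wUW : w \in (U + W)%VS by apply: memv_add.
have wU : w \notin U.
  apply: contra u'U => wU; have -> : u' = (w - u)%R by rewrite /w addrC addKr.
  by apply: memvB.
have wW : w \notin W.
  apply: contra uW => wW; have -> : u = (w - u')%R by rewrite /w addrK.
  by apply: memvB.
pose phi (t : h.-tuple V) : h.-tuple V := insubd t ((head 0%R t + w)%R :: behead t).
have szh (t : h.-tuple V) : size ((head 0%R t + w)%R :: behead t) == h.
  by rewrite /= size_behead size_tuple prednK.
have vphi t : val (phi t) = (head 0%R t + w)%R :: behead t.
  by rewrite /phi val_insubd szh.
have ht (t : h.-tuple V) : tval t = head 0%R t :: behead t.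
  by case: t => -[|y s] //= sz; move: sz Hh0 => /eqP <-.
have phi_inj : injective phi.
  move=> t1 t2 e; apply: val_inj; rewrite /= (ht t1) (ht t2).
  by move: (congr1 val e); rewrite !vphi => -[/addIr -> ->].
rewrite -(card_imset _ phi_inj); apply: subset_leq_card; apply/subsetP => t'.
case/imsetP => t /T_facts[ft tUW _] ->.
have hU : head 0%R t \in (U :&: W)%VS.
  by apply: (subvP tUW); apply: memv_span; rewrite (ht t) mem_head.
have sUW : (<<behead t>> <= U :&: W)%VS.
  apply/span_subvP => y yb; apply: (subvP tUW); apply: memv_span.
  by rewrite (ht t) inE yb orbT.
move: ft; rewrite (ht t) free_cons => /andP[_ fs].
rewrite inE; apply/hasP; exists W => //; rewrite nWU dUW /= vphi /=.
move: hU; rewrite memv_cap => /andP[hU hW].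
rewrite fs (subv_trans sUW (capvSl _ _)) /=.
rewrite (memvD (subvP (addvSl U W) _ hU) wUW) /=.
have hdW : (w = head 0%R t + w - head 0%R t)%R by rewrite addrC addKr.
apply/andP; split.
  apply/negP => hwU; move/negP: wU; apply; rewrite hdW; exact: memvB.
apply/negP => hwW; move/negP: wW; apply; rewrite hdW; exact: memvB.
Qed.

Lemma lower U : U \in C ->
  2 * \prod_(i < h) (q ^ k - q ^ i) <= \sum_t g U t + \prod_(i < h) (q ^ h - q ^ i).
Proof.
move=> UC.
have cTU : #|T U| = \prod_(i < h) (q ^ k - q ^ i) by rewrite /T card_Tset Cdim.
rewrite /g big_split /= sum_bool_card -cTU.
have two : 2 * #|T U| = \sum_t 2 * (t \in T U).
  by rewrite -big_distrr /= sum_bool_card.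
case: (boolP (has (fun W => (W != U) && (h <= \dim (U :&: W))) C)) =>
    [/hasP[W WC /andP[nWU dW]] | hP]; last first.
  rewrite two; apply: leq_trans (leq_addr _ _); apply: leq_trans (leq_addr _ _).
  apply: leq_sum => t _; case tU: (t \in T U) => //.
  suff -> : other U t = false by [].
  apply/negP => /hasP[W WC /andP[nWU tW]]; move/hasPn: hP => /(_ W WC).
  rewrite nWU /=; case/T_facts: tW => _ tsW dt; case/T_facts: tU => _ tsU _.
  by rewrite -dt; move/negP; apply; apply: dimvS; rewrite subv_cap tsU tsW.
have oth t : t \in T U -> other U t = (t \in T W).
  move=> tU; apply/hasP/idP => [[W' W'C /andP[nW'U tW']] | tW].
    suff eW : W = W' by rewrite eW.
    apply: (partner UC WC W'C nWU nW'U dW).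
    case/T_facts: tW' => _ tsW dt; case/T_facts: tU => _ tsU _.
    by rewrite -dt; apply: dimvS; rewrite subv_cap tsU tsW.
  by exists W => //; rewrite nWU tW.
have TI : #|T (U :&: W)| = \sum_t ((t \in T U) && (t \in T W)).
  rewrite sum_bool_card; apply: eq_card => t; rewrite /T !inE subv_cap.
  rewrite unfold_in /= !inE.
  by case: (free t); case: (<<t>> <= U)%VS; case: (<<t>> <= W)%VS.
have key : \sum_t (t \in T U) * (2 - other U t) + #|T (U :&: W)| = 2 * #|T U|.
  rewrite TI two -big_split /=; apply: eq_bigr => t _.
  case tU: (t \in T U) => //=; rewrite oth //; by case: (t \in T W).
case: (leqP (\dim (U :&: W)) h) => hd.
  have dh : \dim (U :&: W) = h by apply/eqP; rewrite eqn_leq hd dW.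
  have : #|T (U :&: W)| = \prod_(i < h) (q ^ h - q ^ i) by rewrite /T card_Tset dh.
  move=> e; rewrite -e -key addnAC; exact: leq_addr.
rewrite -key -addnA leq_add2l; apply: leq_trans (inj_E UC WC nWU hd) _; exact: leq_addr.
Qed.

Lemma global : size C * (2 * \prod_(i < h) (q ^ k - q ^ i) - \prod_(i < h) (q ^ h - q ^ i))
   <= 2 * \prod_(i < h) (q ^ n - q ^ i).
Proof.
apply: (@leq_trans (\sum_(U <- C) \sum_t g U t)).
  rewrite -sum_const_seq big_seq [X in _ <= X]big_seq; apply: leq_sum => U UC.
  by rewrite leq_subLR addnC; apply: lower.
rewrite exchange_big /=.
apply: (@leq_trans (\sum_(t : h.-tuple V) 2 * free t)); first by apply: leq_sum => t _; apply: pointwise.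
rewrite -big_distrr /= leq_mul2l; apply/orP; right.
have -> : \prod_(i < h) (q ^ n - q ^ i) = #|Tset h (fullv : {vspace V})|.
  by rewrite card_Tset dimvf /dim /= mul1n.
rewrite sum_bool_card; apply: subset_leq_card; apply/subsetP => t.
by rewrite !inE subvf andbT.
Qed.

End Main.
End Count.

Section Final.
Local Open Scope ring_scope.

Lemma final_ineq (c a b N : nat) : (0 < b)%N -> (b <= a)%N -> (c * (2 * a - b) <= 2 * N)%N ->
  (c%:R : rat) <= (1 + 1 / (2 * (a%:R / b%:R) - 1)) * ((N%:R / b%:R) / (a%:R / b%:R)).
Proof.
move=> b0 ba H.
have a0 : (0 < a)%N by apply: leq_trans ba.
have d0 : (0 < 2 * a - b)%N by rewrite subn_gt0; lia.
have bR : (b%:R : rat) != 0 by rewrite pnatr_eq0 -lt0n.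
have aR : (a%:R : rat) != 0 by rewrite pnatr_eq0 -lt0n.
have dR : ((2 * a - b)%N%:R : rat) = 2 * a%:R - b%:R.
  by rewrite natrB ?natrM //; lia.
have dR0 : (2 * a%:R - b%:R : rat) != 0 by rewrite -dR pnatr_eq0 -lt0n.
have -> : (1 + 1 / (2 * (a%:R / b%:R) - 1)) * ((N%:R / b%:R) / (a%:R / b%:R))
   = (2 * N)%N%:R / (2 * a - b)%N%:R :> rat.
  rewrite dR natrM.
  have e : (2 * (a%:R / b%:R) - 1 : rat) = (2 * a%:R - b%:R) / b%:R.
    by field.
  rewrite e; field; rewrite dR0 aR bR //.
rewrite ler_pdivlMr ?ltr0n // -natrM ler_nat.
exact: H.
Qed.

Lemma gauss_nat (q m h : nat) : (0 < q)%N -> (h <= m)%N ->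
  gauss_binom q m h = (\prod_(i < h) (q ^ m - q ^ i))%N%:R / (\prod_(i < h) (q ^ h - q ^ i))%N%:R.
Proof.
move=> q0 hm; rewrite /gauss_binom prodf_div !natr_prod.
congr (_ / _); apply: eq_bigr => i _; rewrite natrB //; apply: leq_pexp2l => //.
  exact: leq_trans (ltnW (ltn_ord i)) hm.
exact: ltnW (ltn_ord i).
Qed.
End Final.

Local Open Scope ring_scope.
Theorem mainTheorem3 (F : finFieldType) (n k delta : nat)
    (C : seq {vspace 'rV[F]_n}) :
  (0 < n)%N -> (0 < k)%N -> (0 < delta)%N -> (k <= n)%N -> (delta <= 2 * k)%N ->
  covering_code k delta 3 C ->
  let q := #|F| in
  let h := ((k + 1) - (delta.+1)./2)%N in
  (size C)%:R <=
    (1 + 1 / (2 * gauss_binom q k h - 1)) * (gauss_binom q n h / gauss_binom q k h) :> rat.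
Proof.
move=> n0 k0 d0 kn dk [Cu Cdim Ccov]; cbv zeta.
set q := #|F|; set h := (k + 1 - delta.+1./2)%N.
have q1 : (1 < q)%N by rewrite /q finNzRing_gt1.
have q0 : (0 < q)%N by apply: ltnW.
have hk : (h <= k)%N by rewrite /h -divn2; lia.
have hn : (h <= n)%N by apply: leq_trans kn.
have Hh0 : (0 < h)%N by rewrite /h -divn2; lia.
have Hh : (2 * k < 2 * h + delta)%N by rewrite /h -divn2; lia.
have Ccov3 : forall A B D, A \in C -> B \in C -> D \in C ->
  uniq [:: A; B; D] -> (k + delta <= \dim (A + (B + (D + 0))))%N.
  move=> A B D AC BC DC u.
  have := Ccov [:: A; B; D] u erefl.
  rewrite !big_cons big_nil; apply.
  by move=> x; rewrite !inE => /or3P[] /eqP ->.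
have G := global Cu Cdim Ccov3 Hh Hh0.
rewrite (gauss_nat q0 hk) (gauss_nat q0 hn).
apply: final_ineq G.
  rewrite prodn_gt0 // => i; rewrite subn_gt0 ltn_exp2l //.
apply: leq_prod => i _; apply: leq_sub2r; apply: leq_pexp2l => //.
Qed.
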